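(* Let $X\subseteq\{0,1\}^{\mathbb Z}$ be a measure-theoretically subordinate subshift. Then the base measure $\nu$ of $X$ is unique and ergodic. Moreover, $\nu$ is the unique measure in $\mathcal M(X)$ satisfying \[ \nu(1)=\sup_{\mu\in\mathcal M(X)}\mu(1), \] where for a measure $\mu$ on $\{0,1\}^{\mathbb Z}$ we write $\mu(1)=\mu(\{x: x_0=1\})$.
   Context: $\sigma$ denotes the left shift on $\{0,1\}^{\mathbb Z}$; a subshift is a closed $\sigma$-invariant subset. For a subshift (or product of subshifts) $Y$, $\mathcal M(Y)$ denotes the set of Borel probability measures on $Y$ invariant under the (product) shift. Let $M\colon\{0,1\}^{\mathbb Z}\times\{0,1\}^{\mathbb Z}\to\{0,1\}^{\mathbb Z}$ be coordinatewise multiplication, $M(x,y)_n=x_ny_n$, and $\pi_1$ the projection onto the first coordinate. A subshift $X\subseteq\{0,1\}^{\mathbb Z}$ is a measure-theoretically subordinate subshift if there exists $\nu\in\mathcal M(\{0,1\}^{\mathbb Z})$ such that $\mathcal M(X)=\{M_*(\lambda):\lambda\in\mathcal M(\{0,1\}^{\mathbb Z}\times\{0,1\}^{\mathbb Z},\sigma\times\sigma),\ (\pi_1)_*\lambda=\nu\}$; any such $\nu$ is called a base measure. *)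

(* Defs.v *)
From HB Require Import structures.
From mathcomp Require Import all_boot all_order all_algebra.
From mathcomp Require Import all_classical all_reals all_analysis.
Set Implicit Arguments. Unset Strict Implicit. Unset Printing Implicit Defensive.
Import Order.TTheory GRing.Theory Num.Theory.
Local Open Scope classical_set_scope.
Local Open Scope ring_scope.

Definition config := int -> bool.

Definition cyl_gen : set (set config) :=
  [set A | exists (n : int) (b : bool), A = [set x | x n = b]].

Definition Conf := g_sigma_algebraType cyl_gen.
Definition conf_display := sigma_display cyl_gen.

Definition shift (x : Conf) : Conf := fun n => x (n + 1).

Definition Mmul (xy : (Conf * Conf)%type) : Conf := fun n => xy.1 n && xy.2 n.

(* closed subsets of {0,1}^Z (product of discrete topologies): every point
   outside X has a cylinder neighbourhood [-N,N] disjoint from X *)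
Definition closed_conf (X : set Conf) : Prop :=
  forall x : Conf, ~ X x -> exists N : nat,
    forall y : Conf, (forall n : int, `|n| <= N%:Z -> y n = x n) -> ~ X y.

Definition subshift (X : set Conf) : Prop :=
  closed_conf X /\ shift @` X = X.

Definition shift_invariant (R : realType) (mu : probability Conf R) : Prop :=
  forall A : set Conf, measurable A -> mu (shift @^-1` A) = mu A.

Definition shift2_invariant (R : realType)
    (lam : probability (Conf * Conf)%type R) : Prop :=
  forall A : set (Conf * Conf)%type, measurable A ->
    lam ((fun xy : (Conf * Conf)%type => (shift xy.1, shift xy.2)) @^-1` A)
    = lam A.

Definition inM (R : realType) (X : set Conf) (mu : probability Conf R) : Prop :=
  shift_invariant mu /\ mu (~` X) = 0%E.

Definition base_measure (R : realType) (X : set Conf) (nu : probability Conf R)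
  : Prop :=
  shift_invariant nu /\
  forall mu : probability Conf R,
    inM X mu <->
    exists lam : probability (Conf * Conf)%type R,
      shift2_invariant lam /\
      (forall A : set Conf, measurable A -> lam (fst @^-1` A) = nu A) /\
      (forall A : set Conf, measurable A -> mu A = lam (Mmul @^-1` A)).

Definition mt_subordinate (R : realType) (X : set Conf) : Prop :=
  subshift X /\ exists nu : probability Conf R, base_measure X nu.

Definition ergodic (R : realType) (mu : probability Conf R) : Prop :=
  shift_invariant mu /\
  forall A : set Conf, measurable A -> shift @^-1` A = A ->
    mu A = 0%E \/ mu A = 1%E.

Definition one_cyl : set Conf := [set x | x 0 = true].

(* Main.v *)
Require Import Defs.
From HB Require Import structures.
From mathcomp Require Import all_boot all_order all_algebra.
From mathcomp Require Import all_classical all_reals all_analysis.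
From mathcomp Require Import lra.
Import Order.TTheory GRing.Theory Num.Theory.
Local Open Scope classical_set_scope.
Local Open Scope ereal_scope.

Set Implicit Arguments. Unset Strict Implicit. Unset Printing Implicit Defensive.


Lemma measConfE : @measurable _ Conf = <<s cyl_gen >>.
Proof. by []. Qed.

Lemma cyl_meas (n : int) (b : bool) : measurable ([set x : Conf | x n = b]).
Proof. apply: sub_sigma_algebra; by exists n, b. Qed.

Lemma shift_meas : measurable_fun setT Defs.shift.
Proof.
apply: (@measurability _ _ Conf Conf setT Defs.shift cyl_gen measConfE).
move=> _ [_ [n [b ->]] <-].
rewrite setTI.
have -> : Defs.shift @^-1` [set x : Conf | x n = b] = [set x : Conf | x (n+1)%R = b] by [].
exact: cyl_meas.
Qed.

Definition XB (n : int) (b c : bool) : set (Conf * Conf)%type :=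
  [set xy | xy.1 n = b /\ xy.2 n = c].

Lemma XB_meas n b c : measurable (XB n b c).
Proof.
have -> : XB n b c = [set x : Conf | x n = b] `*` [set x : Conf | x n = c] by [].
by apply: measurableX; exact: cyl_meas.
Qed.

Lemma Mmul_meas : measurable_fun setT Mmul.
Proof.
apply: (@measurability _ _ _ Conf setT Mmul cyl_gen measConfE).
move=> _ [_ [n [b ->]] <-].
rewrite setTI.
case: b.
  have -> : Mmul @^-1` [set x : Conf | x n = true] = XB n true true.
    by apply/seteqP; split => -[x y]; rewrite /XB /Mmul /=; case: (x n); case: (y n); intuition.
  exact: XB_meas.
have -> : Mmul @^-1` [set x : Conf | x n = false] = ~` XB n true true.
  by apply/seteqP; split => -[x y]; rewrite /XB /Mmul /=; case: (x n); case: (y n); intuition.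
apply: measurableC; exact: XB_meas.
Qed.

Definition ones : Conf := fun _ => true.
Definition emb (x : Conf) : (Conf * Conf)%type := (x, ones).

Lemma emb_meas : measurable_fun setT emb.
Proof. apply: measurable_fun_pair; [exact: measurable_id | exact: measurable_cst]. Qed.

Lemma pre_meas d d' (T1 : measurableType d) (T2 : measurableType d') (f : T1 -> T2) (A : set T2) :
  measurable_fun setT f -> measurable A -> measurable (f @^-1` A).
Proof. by move=> mf mA; rewrite -[X in measurable X]setTI; apply: mf. Qed.

Section lamE.
Variables (R : realType) (nu : probability Conf R).
Definition lamE := fun A => nu (emb @^-1` A).
Let lamE0 : lamE set0 = 0. Proof. by rewrite /lamE preimage_set0 measure0. Qed.
Let lamE_ge0 A : 0 <= lamE A. Proof. exact: measure_ge0. Qed.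
Let lamE_sa : semi_sigma_additive lamE.
Proof.
move=> F mF tF mUF; rewrite /lamE preimage_bigcup.
apply: measure_semi_sigma_additive.
- by move=> n; apply: pre_meas => //; exact: emb_meas.
- apply/trivIsetP => /= i j _ _ ij; rewrite -preimage_setI.
  by move/trivIsetP : tF => /(_ _ _ _ _ ij) ->//; rewrite preimage_set0.
- by rewrite -preimage_bigcup; apply: pre_meas => //; exact: emb_meas.
Qed.
HB.instance Definition _ := isMeasure.Build _ _ _ lamE lamE0 lamE_ge0 lamE_sa.
Let lamE1 : lamE setT = 1.
Proof. by rewrite /lamE preimage_setT probability_setT. Qed.
HB.instance Definition _ := Measure_isProbability.Build _ _ _ lamE lamE1.
End lamE.
Section condm.
Variables (R : realType) (nu : probability Conf R) (A : set Conf) (mA : measurable A).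
Definition condm := fun B : set Conf =>
  if `[< measurable B >] then mnormalize (mrestr nu mA) nu B else 0.
Let condm0 : condm set0 = 0.
Proof. by rewrite /condm asboolT // measure0. Qed.
Let condm_ge0 B : 0 <= condm B.
Proof. rewrite /condm; case: asboolP => _ //; exact: measure_ge0. Qed.
Let condm_sa : semi_sigma_additive condm.
Proof.
move=> F mF tF mUF; rewrite /condm asboolT //.
have -> : (fun n => \sum_(0 <= i < n) (if `[< measurable (F i) >] then
   mnormalize (mrestr nu mA) nu (F i) else 0)) =
   (fun n => \sum_(0 <= i < n) mnormalize (mrestr nu mA) nu (F i)).
  by apply/funext => n; apply: eq_bigr => i _; rewrite asboolT.
exact: measure_semi_sigma_additive.
Qed.
HB.instance Definition _ := isMeasure.Build _ _ _ condm condm0 condm_ge0 condm_sa.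
Let condm1 : condm setT = 1.
Proof. by rewrite /condm asboolT // probability_setT. Qed.
HB.instance Definition _ := Measure_isProbability.Build _ _ _ condm condm1.

Lemma condmE B : measurable B -> nu A != 0 ->
  condm B = nu (B `&` A) * ((fine (nu A))^-1)%:E.
Proof.
move=> mB nA; rewrite /condm asboolT // /mnormalize /=. rewrite /mrestr setTI.
have -> : (nu A == +oo) = false.
  apply/negbTE; rewrite lt_eqF // (le_lt_trans (probability_le1 nu mA)) // ltey //.
by rewrite (negbTE nA).
Qed.

Lemma condmN B : ~ measurable B -> condm B = 0.
Proof. by move=> nB; rewrite /condm asboolF. Qed.
End condm.


Lemma fst_one : fst @^-1` one_cyl = XB 0%R true true `|` XB 0%R true false.
Proof.
apply/seteqP; split => -[x y]; rewrite /XB /one_cyl /=.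
  by move=> ->; case: (y 0%R); [left|right].
by case => -[].
Qed.

Lemma Mmul_one : Mmul @^-1` one_cyl = XB 0%R true true.
Proof.
apply/seteqP; split => -[x y]; rewrite /XB /one_cyl /Mmul /=.
  by case: (x 0%R); case: (y 0%R).
by case => -> ->.
Qed.

Definition Nset : set (Conf * Conf)%type :=
  \bigcup_k (XB (Posz k) true false `|` XB (- Posz k)%R true false).

Lemma Nset_meas : measurable Nset.
Proof. by apply: bigcupT_measurable => k; apply: measurableU; exact: XB_meas. Qed.

Lemma Mmul_off (xy : (Conf * Conf)%type) : ~ Nset xy -> Mmul xy = xy.1.
Proof.
move=> hN; apply/funext => n; rewrite /Mmul.
have hn : ~ XB n true false xy.
  move=> hx; apply: hN; case: n hx => k hx.
    by exists k => //; left.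
  exists k.+1 => //; right; by rewrite -NegzE.
move: hn; rewrite /XB; case E1: (xy.1 n); case E2: (xy.2 n) => //= hn.
by exfalso; apply: hn.
Qed.

Lemma measure_off_null R (lam : probability (Conf * Conf)%type R) (C : set (Conf * Conf)%type) :
  measurable C -> lam Nset = 0 -> lam C = lam (C `\` Nset).
Proof.
move=> mC hN; rewrite (measureDI lam mC Nset_meas).
rewrite [X in _ + X](_ : _ = 0) ?adde0 //.
  apply/eqP; rewrite eq_le measure_ge0 andbT -hN.
  by apply: le_measure; rewrite ?inE; [apply: measurableI => //; exact: Nset_meas|exact: Nset_meas|exact: subIsetr].
Qed.

Section main.
Variables (R : realType) (X : set Conf).

Lemma base_in (nu : probability Conf R) : base_measure X nu -> inM X nu.
Proof.
move=> [sinv H]; apply/(H nu); exists (lamE nu); split; [|split].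
- move=> A mA.
  transitivity (nu (Defs.shift @^-1` (emb @^-1` A))); first by [].
  by apply: sinv; apply: pre_meas => //; exact: emb_meas.
- by [].
- move=> A mA.
  transitivity (nu (emb @^-1` (Mmul @^-1` A))); last by [].
  have -> : emb @^-1` (Mmul @^-1` A) = A.
    apply/seteqP; split => x /=; rewrite /Mmul /=.
    + by have -> : (fun n => x n && ones n) = x by apply/funext => n; rewrite andbT.
    + by have -> : (fun n => x n && ones n) = x by apply/funext => n; rewrite andbT.
  by [].
Qed.
Lemma base_bound (nu mu : probability Conf R) : base_measure X nu -> inM X mu ->
  mu one_cyl <= nu one_cyl.
Proof.
move=> [sinv H] /H [lam [hsh [hm hM]]].
rewrite (hM one_cyl (cyl_meas 0%R true)) -(hm one_cyl (cyl_meas 0%R true)) Mmul_one fst_one.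
apply: le_measure; rewrite ?inE.
- exact: XB_meas.
- by apply: measurableU; exact: XB_meas.
- exact: subsetUl.
Qed.

Lemma base_max (nu mu : probability Conf R) : base_measure X nu -> inM X mu ->
  mu one_cyl = nu one_cyl -> forall B, measurable B -> mu B = nu B.
Proof.
move=> [sinv H] /H [lam [hsh [hm hM]]] heq.
have m1 := cyl_meas 0%R true.
have h0 : lam (XB 0%R true false) = 0.
  have e1 : nu one_cyl = lam (XB 0%R true true) + lam (XB 0%R true false).
    rewrite -(hm _ m1) fst_one measureU //; try exact: XB_meas.
    by apply/seteqP; split => -[x y] //= [[_ h1] [_ h2]]; rewrite h1 in h2.
  have e2 : mu one_cyl = lam (XB 0%R true true) by rewrite (hM _ m1) Mmul_one.
  rewrite -heq e2 in e1.
  have fin : lam (XB 0%R true true) \is a fin_num.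
    by apply: fin_num_measure; exact: XB_meas.
  by rewrite -(addeK (lam (XB 0%R true false)) fin) (addeC (lam (XB 0%R true false))) -e1 subee.
have hS : forall n, lam (XB (n + 1)%R true false) = lam (XB n true false).
  by move=> n; exact: (hsh _ (XB_meas n true false)).
have hall : forall n, lam (XB n true false) = 0.
  have hp : forall k : nat, lam (XB (Posz k) true false) = 0.
    elim => [//|k IH]; by rewrite -addn1 PoszD hS.
  have hneg : forall k : nat, lam (XB (- Posz k)%R true false) = 0.
    elim => [//|k IH]; rewrite -IH -hS; congr (lam (XB _ _ _)).
    by rewrite -addn1 PoszD opprD addrNK.
  by case => k; [exact: hp | rewrite NegzE; exact: hneg].
have hN : lam Nset = 0.
  pose F := fun k : nat => XB (Posz k) true false `|` XB (- Posz k)%R true false.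
  have hs : lam Nset <= \sum_(0 <= k <oo) lam (F k).
    apply: measure_sigma_subadditive => //.
    - by move=> k; apply: measurableU; exact: XB_meas.
    - exact: Nset_meas.
  rewrite eseries0 in hs; last first.
    move=> k _ _; rewrite /F.
    by apply: null_set_setU; try exact: XB_meas; exact: hall.
  by apply/eqP; rewrite eq_le measure_ge0 andbT.
move=> B mB.
rewrite (hM _ mB) -(hm _ mB).
have mMB : measurable (Mmul @^-1` B) by apply: pre_meas => //; exact: Mmul_meas.
have mFB : measurable (fst @^-1` B : set (Conf * Conf)%type).
  exact: (pre_meas (@measurable_fst _ _ Conf Conf) mB).
rewrite (measure_off_null mMB hN) (measure_off_null mFB hN).
congr (lam _); apply/seteqP; split => xy [h1 h2]; split => //=.
- by move: h1; rewrite /preimage /= Mmul_off.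
- by rewrite /preimage /= Mmul_off.
Qed.
End main.


Section erg.
Variables (R : realType) (X : set Conf).

Lemma finE (P : probability Conf R) (B : set Conf) : measurable B ->
  exists p : R, P B = p%:E.
Proof.
move=> mB; exists (fine (P B)); rewrite fineK //.
by apply: fin_num_measure.
Qed.

Lemma cond_inM (nu : probability Conf R) (B : set Conf) (mB : measurable B) :
  base_measure X nu -> Defs.shift @^-1` B = B -> nu B != 0 -> inM X (condm nu mB).
Proof.
move=> hb hB nB; have [sinv _] := hb; have [_ hX] := base_in hb; split.
- move=> C mC.
  have mSC : measurable (Defs.shift @^-1` C) by apply: pre_meas => //; exact: shift_meas.
  rewrite /= !condmE //; congr (_ * _).
  rewrite -{1}hB -preimage_setI; apply: sinv; exact: measurableI.
- case: (pselect (measurable (~` X))) => mX.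
  + rewrite /= condmE //.
    have -> : nu (~` X `&` B) = 0.
      apply/eqP; rewrite eq_le measure_ge0 andbT -hX.
      apply: le_measure; rewrite ?inE //; first exact: measurableI.
    by rewrite mul0e.
  + by rewrite /= condmN.
Qed.

Lemma base_ergodic (nu : probability Conf R) : base_measure X nu -> ergodic nu.
Proof.
move=> hb; have [sinv _] := hb; split => // A mA hA.
case: (eqVneq (nu A) 0) => [->|nA0]; first by left.
case: (eqVneq (nu A) 1) => [->|nA1]; first by right.
exfalso.
have mAc : measurable (~` A) := measurableC mA.
have hAc : Defs.shift @^-1` (~` A) = ~` A by rewrite preimage_setC; congr (~` _); exact: hA.
have [c hc] := finE nu mA.
have hcA : nu (~` A) = (1 - c)%:E by rewrite probability_setC // hc.
have c0 : (0 < c)%R.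
  rewrite lt_neqAle eq_sym; apply/andP; split.
    by move: nA0; rewrite hc eqe.
  by rewrite -lee_fin -hc measure_ge0.
have c1 : (c < 1)%R.
  rewrite lt_neqAle; apply/andP; split.
    by move: nA1; rewrite hc eqe.
  by rewrite -lee_fin -hc probability_le1.
have nAc0 : nu (~` A) != 0 by rewrite hcA eqe subr_eq0 (gt_eqF c1).
have i1 := cond_inM mA hb hA nA0.
have i2 := cond_inM mAc hb hAc nAc0.
have b1 := base_bound hb i1.
have b2 := base_bound hb i2.
have m1 := cyl_meas 0%R true.
have [p hp] := finE nu (measurableI _ _ m1 mA).
have [q hq] := finE nu (measurableI _ _ m1 mAc).
have [m hm] := finE nu m1.
have hpq : m = (p + q)%R.
  have e : nu one_cyl = nu (one_cyl `&` ~` A) + nu (one_cyl `&` A).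
    by rewrite -setDE; exact: measureDI.
  move: e; rewrite hm hp hq => /eqP; rewrite -EFinD eqe => /eqP ->.
  by rewrite addrC.
rewrite /= condmE // hp hc /= -EFinM hm lee_fin in b1.
rewrite /= condmE // hq hcA /= -EFinM hm lee_fin in b2.
have hp' : (p <= m * c)%R by rewrite -ler_pdivrMr.
have hq' : (q <= m * (1 - c))%R by rewrite -ler_pdivrMr // subr_gt0.
have hmc : (m * c <= p)%R by lra.
have e1 : condm nu mA one_cyl = nu one_cyl.
  rewrite condmE // hp hc hm /= -EFinM; congr (_%:E).
  by apply/eqP; rewrite eq_le b1 /= ler_pdivlMr.
have := base_max hb i1 e1 mA.
rewrite /= condmE // setIid hc /= -EFinM divff ?gt_eqF // => /esym h1.
by move/eqP: nA1; apply; rewrite hc h1.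
Qed.
End erg.

Unset Implicit Arguments. Set Strict Implicit.

Theorem proposition3p1 (R : realType) (X : set Conf) :
  mt_subordinate R X ->
  exists nu : probability Conf R,
    base_measure X nu /\
    (* uniqueness of the base measure *)
    (forall nu' : probability Conf R, base_measure X nu' ->
       forall A : set Conf, measurable A -> nu' A = nu A) /\
    (* ergodicity *)
    ergodic nu /\
    (* nu maximizes the frequency of 1 in M(X) ... *)
    inM X nu /\
    nu one_cyl = ereal_sup [set r | exists mu : probability Conf R,
                                      inM X mu /\ mu one_cyl = r] /\
    (* ... and is the unique such measure in M(X) *)
    (forall mu : probability Conf R, inM X mu ->
       mu one_cyl = ereal_sup [set r | exists mu' : probability Conf R,
                                         inM X mu' /\ mu' one_cyl = r] ->
       forall A : set Conf, measurable A -> mu A = nu A).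
Proof.
move=> [_ [nu hb]]; exists nu.
have hin := base_in hb.
have hsup : nu one_cyl = ereal_sup [set r | exists mu : probability Conf R,
                                      inM X mu /\ mu one_cyl = r].
  apply/eqP; rewrite eq_le; apply/andP; split.
  - by apply: ereal_sup_ubound; exists nu.
  - by apply: ge_ereal_sup => r [mu [hmu <-]]; exact: base_bound hb hmu.
split => //; split.
  move=> nu' hb' A mA; apply: (base_max hb (base_in hb')) => //.
  by apply/eqP; rewrite eq_le (base_bound hb (base_in hb')) (base_bound hb' hin).
split; first exact: base_ergodic hb.
split => //; split => //.
by move=> mu hmu; rewrite -hsup => h; exact: base_max hb hmu h.
Qed.
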